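(* Let $\delta_1,\delta_2$ be diagonal sections of 2-copulas. (a) For $i=1,2$ let $C_i(u_1,u_2)=\min\{u_1,u_2,(\delta_i(u_1)+\delta_i(u_2))/2\}$ be the Fredricks–Nelsen copulas. (b) Alternatively, for $i=1,2$ let $C_i$ be the Bertino copulas $C_i(u_1,u_2)=u_1-\min_{t\in[u_1,u_2]}(t-\delta_i(t))$ if $u_1\le u_2$ and $C_i(u_1,u_2)=u_2-\min_{t\in[u_2,u_1]}(t-\delta_i(t))$ if $u_2\le u_1$. In either case (a) or (b), if $C_1,C_2$ admit tail dependence functions and $C_1<_{TD}C_2$, then $C_1\le_{loc}C_2$.
   Context: A 2-copula is a grounded, 2-increasing function $C:[0,1]^2\to[0,1]$ with uniform margins; its diagonal section is $\delta(t)=C(t,t)$. The Fredricks–Nelsen and Bertino functions defined from the diagonal section of any 2-copula are 2-copulas with that diagonal. Tail dependence function: $\Lambda(\boldsymbol w;C)=\lim_{s\searrow0}C(s\boldsymbol w)/s$, $\boldsymbol w\in[0,\infty)^2$. $C_1<_{TD}C_2$ means $\Lambda(\boldsymbol w;C_1)<\Lambda(\boldsymbol w;C_2)$ for all $\boldsymbol w\in(0,\infty)^2$. $C_1\le_{loc}C_2$ means there is $\varepsilon>0$ with $C_1(\boldsymbol u)\le C_2(\boldsymbol u)$ for all $\boldsymbol u\in B_\varepsilon(\boldsymbol 0)\cap[0,1]^2$ (Euclidean ball). *)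

(* Defs.v *)
From Stdlib Require Import Reals Lra.
From Coquelicot Require Import Coquelicot.
Open Scope R_scope.

Definition is_copula (C : R -> R -> R) : Prop :=
  (forall u1 u2, 0 <= u1 <= 1 -> 0 <= u2 <= 1 -> 0 <= C u1 u2 <= 1) /\
  (forall u, 0 <= u <= 1 -> C 0 u = 0 /\ C u 0 = 0) /\
  (forall u, 0 <= u <= 1 -> C u 1 = u /\ C 1 u = u) /\
  (forall u1 v1 u2 v2, 0 <= u1 -> u1 <= v1 -> v1 <= 1 ->
      0 <= u2 -> u2 <= v2 -> v2 <= 1 ->
      0 <= C v1 v2 - C u1 v2 - C v1 u2 + C u1 u2).

Definition is_diagonal_section (delta : R -> R) : Prop :=
  exists C, is_copula C /\ forall t, 0 <= t <= 1 -> delta t = C t t.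

Definition FN_copula (delta : R -> R) (u1 u2 : R) : R :=
  Rmin u1 (Rmin u2 ((delta u1 + delta u2) / 2)).

(* min_{t in [a,b]} (t - delta t), written as the infimum of the image
   (the minimum is attained since delta is continuous). *)
Definition min_t_minus_delta (delta : R -> R) (a b : R) : R :=
  real (Glb_Rbar (fun x => exists t, a <= t <= b /\ x = t - delta t)).

Definition Bertino_copula (delta : R -> R) (u1 u2 : R) : R :=
  if Rle_dec u1 u2 then u1 - min_t_minus_delta delta u1 u2
  else u2 - min_t_minus_delta delta u2 u1.

Definition TD_limit (C : R -> R -> R) (w1 w2 l : R) : Prop :=
  filterlim (fun s => C (s * w1) (s * w2) / s) (at_right 0) (locally l).

Definition admits_TDF (C : R -> R -> R) : Prop :=
  forall w1 w2, 0 <= w1 -> 0 <= w2 -> exists l, TD_limit C w1 w2 l.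

Definition TD_lt (C1 C2 : R -> R -> R) : Prop :=
  forall w1 w2 l1 l2, 0 < w1 -> 0 < w2 ->
    TD_limit C1 w1 w2 l1 -> TD_limit C2 w1 w2 l2 -> l1 < l2.

Definition loc_le (C1 C2 : R -> R -> R) : Prop :=
  exists eps, 0 < eps /\
    forall u1 u2, 0 <= u1 <= 1 -> 0 <= u2 <= 1 ->
      sqrt (u1 ^ 2 + u2 ^ 2) < eps -> C1 u1 u2 <= C2 u1 u2.

(* Main.v *)
Require Import Defs.
From Stdlib Require Import Reals Lra.
From Coquelicot Require Import Coquelicot.
Open Scope R_scope.

Lemma eventually_lt (f1 f2 : R -> R) l1 l2 :
  filterlim f1 (at_right 0) (locally l1) ->
  filterlim f2 (at_right 0) (locally l2) -> l1 < l2 ->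
  exists eps, 0 < eps /\ forall s, 0 < s < eps -> f1 s < f2 s.
Proof.
  intros H1 H2 Hl.
  assert (He : 0 < (l2 - l1) / 2) by lra.
  pose (e := mkposreal _ He).
  apply filterlim_locally with (eps := e) in H1.
  apply filterlim_locally with (eps := e) in H2.
  destruct (filter_and _ _ H1 H2) as [d Hd].
  exists d; split; [apply cond_pos|].
  intros s Hs.
  assert (Hb : ball 0 d s).
  { unfold ball; simpl; unfold AbsRing_ball, abs, minus, plus, opp; simpl.
    rewrite Rabs_right; lra. }
  destruct (Hd s Hb ltac:(lra)) as [B1 B2].
  revert B1 B2; unfold ball; simpl; unfold AbsRing_ball, abs, minus, plus, opp; simpl.
  unfold e; simpl. intros B1 B2.
  apply Rabs_def2 in B1; apply Rabs_def2 in B2. lra.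
Qed.

Lemma diag_props delta : is_diagonal_section delta ->
  delta 0 = 0 /\ forall t, 0 <= t <= 1 -> 0 <= delta t <= 1.
Proof.
  intros [C [[Hr [Hg _]] Hd]]. split.
  - rewrite Hd by lra. apply (Hg 0); lra.
  - intros t Ht. rewrite Hd by lra. apply Hr; lra.
Qed.

Lemma FN_diag delta s : 0 < s ->
  FN_copula delta (s * 1) (s * 1) / s = Rmin s (Rmin s (delta s)) / s.
Proof.
  intros. unfold FN_copula. rewrite Rmult_1_r.
  replace ((delta s + delta s) / 2) with (delta s) by field. reflexivity.
Qed.

Lemma min_single delta s : min_t_minus_delta delta s s = s - delta s.
Proof.
  unfold min_t_minus_delta.
  rewrite (is_glb_Rbar_unique _ (Finite (s - delta s))); [reflexivity|].
  split.
  - intros x [t [Ht ->]]. replace t with s by lra. simpl; lra.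
  - intros l Hl. apply Hl. exists s; split; [lra|reflexivity].
Qed.

Lemma B_diag delta s :
  Bertino_copula delta (s * 1) (s * 1) / s = delta s / s.
Proof.
  unfold Bertino_copula. rewrite Rmult_1_r.
  destruct (Rle_dec s s); [|lra]. rewrite min_single. f_equal; ring.
Qed.

Lemma diag_lt (C : (R -> R) -> R -> R -> R) delta1 delta2 g :
  (forall d s, 0 < s -> C d (s * 1) (s * 1) / s = g d s / s) ->
  admits_TDF (C delta1) -> admits_TDF (C delta2) ->
  TD_lt (C delta1) (C delta2) ->
  exists eps, 0 < eps /\ forall s, 0 < s < eps -> g delta1 s < g delta2 s.
Proof.
  intros Hg A1 A2 T.
  destruct (A1 1 1 ltac:(lra) ltac:(lra)) as [l1 H1].
  destruct (A2 1 1 ltac:(lra) ltac:(lra)) as [l2 H2].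
  pose proof (T 1 1 l1 l2 ltac:(lra) ltac:(lra) H1 H2) as Hl.
  destruct (eventually_lt _ _ _ _ H1 H2 Hl) as [e [He Hs]].
  exists e; split; auto. intros s Hs'.
  specialize (Hs s Hs'). rewrite !Hg in Hs by lra.
  apply Rmult_lt_reg_r with (/ s). apply Rinv_0_lt_compat; lra. exact Hs.
Qed.

Lemma small_coord u1 u2 eps : 0 <= u1 -> 0 <= u2 -> sqrt (u1 ^ 2 + u2 ^ 2) < eps ->
  u1 < eps /\ u2 < eps.
Proof.
  intros H1 H2 H.
  assert (sqrt (u1 ^ 2) <= sqrt (u1 ^ 2 + u2 ^ 2)) by (apply sqrt_le_1_alt; pose proof (pow2_ge_0 u1); pose proof (pow2_ge_0 u2); lra).
  assert (sqrt (u2 ^ 2) <= sqrt (u1 ^ 2 + u2 ^ 2)) by (apply sqrt_le_1_alt; pose proof (pow2_ge_0 u1); pose proof (pow2_ge_0 u2); lra).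
  rewrite sqrt_pow2 in * by lra. lra.
Qed.

Lemma glb_mono delta1 delta2 a b :
  0 <= a <= b -> b <= 1 ->
  (forall t, 0 <= t <= 1 -> 0 <= delta1 t <= 1) ->
  (forall t, 0 <= t <= 1 -> 0 <= delta2 t <= 1) ->
  (forall t, a <= t <= b -> delta1 t <= delta2 t) ->
  min_t_minus_delta delta2 a b <= min_t_minus_delta delta1 a b.
Proof.
  intros Hab Hb D1 D2 Hd. unfold min_t_minus_delta.
  set (E1 := fun x => exists t, a <= t <= b /\ x = t - delta1 t).
  set (E2 := fun x => exists t, a <= t <= b /\ x = t - delta2 t).
  pose proof (Glb_Rbar_correct E1) as [L1 G1].
  pose proof (Glb_Rbar_correct E2) as [L2 G2].
  assert (F1 : Rbar_le (-1) (Glb_Rbar E1)).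
  { apply G1. intros x [t [Ht ->]]. simpl. specialize (D1 t ltac:(lra)). lra. }
  assert (U1 : Rbar_le (Glb_Rbar E1) (a - delta1 a)).
  { apply L1. exists a; split; [lra|reflexivity]. }
  assert (F2 : Rbar_le (-1) (Glb_Rbar E2)).
  { apply G2. intros x [t [Ht ->]]. simpl. specialize (D2 t ltac:(lra)). lra. }
  assert (U2 : Rbar_le (Glb_Rbar E2) (a - delta2 a)).
  { apply L2. exists a; split; [lra|reflexivity]. }
  assert (M : Rbar_le (Glb_Rbar E2) (Glb_Rbar E1)).
  { apply G1. intros x [t [Ht ->]].
    eapply Rbar_le_trans. apply L2. exists t; split; [exact Ht|reflexivity].
    simpl. specialize (Hd t Ht). lra. }
  destruct (Glb_Rbar E1); destruct (Glb_Rbar E2); simpl in *; try contradiction; lra.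
Qed.

Lemma delta_le_small delta1 delta2 g :
  is_diagonal_section delta1 -> is_diagonal_section delta2 ->
  (forall s, 0 < s -> g delta1 s < g delta2 s -> delta1 s < delta2 s) ->
  (exists eps, 0 < eps /\ forall s, 0 < s < eps -> g delta1 s < g delta2 s) ->
  exists eps, 0 < eps /\ forall t, 0 <= t < eps -> delta1 t <= delta2 t.
Proof.
  intros D1 D2 Hg [e [He Hs]].
  destruct (diag_props _ D1) as [Z1 _]. destruct (diag_props _ D2) as [Z2 _].
  exists e; split; auto. intros t Ht.
  destruct (Req_dec t 0) as [->|Hn]. lra.
  left. apply Hg. lra. apply Hs. lra.
Qed.

Theorem mainTheorem7 (delta1 delta2 : R -> R) :
  is_diagonal_section delta1 -> is_diagonal_section delta2 ->
  (admits_TDF (FN_copula delta1) -> admits_TDF (FN_copula delta2) ->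
     TD_lt (FN_copula delta1) (FN_copula delta2) ->
     loc_le (FN_copula delta1) (FN_copula delta2)) /\
  (admits_TDF (Bertino_copula delta1) -> admits_TDF (Bertino_copula delta2) ->
     TD_lt (Bertino_copula delta1) (Bertino_copula delta2) ->
     loc_le (Bertino_copula delta1) (Bertino_copula delta2)).
Proof.
  intros D1 D2. split.
  - intros A1 A2 T.
    destruct (delta_le_small delta1 delta2 (fun d s => Rmin s (Rmin s (d s))) D1 D2)
      as [e [He Hd]].
    + intros s Hs. unfold Rmin. repeat destruct Rle_dec; lra.
    + apply (diag_lt FN_copula delta1 delta2 (fun d s => Rmin s (Rmin s (d s))));
        auto. intros; apply FN_diag; auto.
    + exists e; split; auto. intros u1 u2 H1 H2 Hs.
      destruct (small_coord u1 u2 e ltac:(lra) ltac:(lra) Hs) as [S1 S2].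
      pose proof (Hd u1 ltac:(lra)). pose proof (Hd u2 ltac:(lra)).
      unfold FN_copula, Rmin. repeat destruct Rle_dec; lra.
  - intros A1 A2 T.
    destruct (delta_le_small delta1 delta2 (fun d s => d s) D1 D2)
      as [e [He Hd]].
    + intros s Hs H; exact H.
    + apply (diag_lt Bertino_copula delta1 delta2 (fun d s => d s));
        auto. intros; apply B_diag; auto.
    + destruct (diag_props _ D1) as [_ R1]. destruct (diag_props _ D2) as [_ R2].
      exists e; split; auto. intros u1 u2 H1 H2 Hs.
      destruct (small_coord u1 u2 e ltac:(lra) ltac:(lra) Hs) as [S1 S2].
      unfold Bertino_copula. destruct Rle_dec.
      * pose proof (glb_mono delta1 delta2 u1 u2 ltac:(lra) ltac:(lra) R1 R2
          ltac:(intros t Ht; apply Hd; lra)). lra.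
      * pose proof (glb_mono delta1 delta2 u2 u1 ltac:(lra) ltac:(lra) R1 R2
          ltac:(intros t Ht; apply Hd; lra)). lra.
Qed.
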